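(* Let $\mathbf{A}=\langle A,\wedge,\vee,\cdot,1,0,{\sim},-,'\rangle$ be a quasi relation algebra. For every positive integer $n$ and all $a,b\in A$, $${\sim}^{2n}(a\cdot b)={\sim}^{2n}a\cdot{\sim}^{2n}b\quad\text{and}\quad -^{2n}(a\cdot b)=-^{2n}a\cdot -^{2n}b.$$
   Context: An FL-algebra $\langle A,\wedge,\vee,\cdot,1,\backslash,/,0\rangle$ is a residuated lattice (a lattice $\langle A,\wedge,\vee\rangle$, a monoid $\langle A,\cdot,1\rangle$, with $a\cdot b\le c \iff a\le c/b\iff b\le a\backslash c$) together with an arbitrary constant $0$. Define ${\sim}a=a\backslash 0$, $-a=0/a$ and $a+b={\sim}(-b\cdot -a)$. It is an InFL-algebra if ${\sim}{-}a={-}{\sim}a=a$ for all $a$. A quasi relation algebra (qRA) is an InFL-algebra with a unary operation $'$ such that for all $a,b$: $a''=a$, $(a\vee b)'=a'\wedge b'$, $({\sim}a)'=-(a')$, and $(a\cdot b)'=a'+b'$. It is written in the signature $\langle A,\wedge,\vee,\cdot,1,0,{\sim},-,'\rangle$. ${\sim}^n a$ and $-^n a$ denote $n$-fold applications. *)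

(* Defs.v *)
From Stdlib Require Import Arith.

(* An FL-algebra: a lattice <A, meet, join>, a monoid <A, mul, one>,
   residuals ldiv (a\c) and rdiv (c/b), and an arbitrary constant zero.
   The lattice order is x <= y :<-> meet x y = x. *)
Record FLAlgebra := {
  car :> Type;
  meet : car -> car -> car;
  join : car -> car -> car;
  mul  : car -> car -> car;
  one  : car;
  ldiv : car -> car -> car;
  rdiv : car -> car -> car;
  zero : car;
  meetC : forall x y, meet x y = meet y x;
  joinC : forall x y, join x y = join y x;
  meetA : forall x y z, meet x (meet y z) = meet (meet x y) z;
  joinA : forall x y z, join x (join y z) = join (join x y) z;
  meet_join_absorb : forall x y, meet x (join x y) = x;
  join_meet_absorb : forall x y, join x (meet x y) = x;
  mulA : forall x y z, mul x (mul y z) = mul (mul x y) z;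
  mul1l : forall x, mul one x = x;
  mul1r : forall x, mul x one = x;
  resid_r : forall a b c, meet (mul a b) c = mul a b <-> meet a (rdiv c b) = a;
  resid_l : forall a b c, meet (mul a b) c = mul a b <-> meet b (ldiv a c) = b
}.

Definition le {A : FLAlgebra} (x y : A) : Prop := meet A x y = x.

(* ~a = a \ 0  and  -a = 0 / a *)
Definition tl {A : FLAlgebra} (a : A) : A := ldiv A a (zero A).
Definition ng {A : FLAlgebra} (a : A) : A := rdiv A (zero A) a.
Definition fplus {A : FLAlgebra} (a b : A) : A := tl (mul A (ng b) (ng a)).

Definition InFL (A : FLAlgebra) : Prop :=
  forall a : A, tl (ng a) = a /\ ng (tl a) = a.

Record qRA := {
  fl :> FLAlgebra;
  qinv : InFL fl;
  cmpl : fl -> fl;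
  cmpl_invol : forall a, cmpl (cmpl a) = a;
  cmpl_join : forall a b, cmpl (join fl a b) = meet fl (cmpl a) (cmpl b);
  cmpl_tl : forall a, cmpl (tl a) = ng (cmpl a);
  cmpl_mul : forall a b, cmpl (mul fl a b) = fplus (cmpl a) (cmpl b)
}.

(* Main.v *)
Require Import Defs.
From Stdlib Require Import Arith Lia.

Section S.
Variable A : FLAlgebra.
Hypothesis H : InFL A.

Lemma le_refl' (x : A) : le x x.
Proof. unfold le. pose proof (meet_join_absorb A x (meet A x x)) as E. rewrite join_meet_absorb in E. exact E. Qed.

Lemma le_anti (x y : A) : le x y -> le y x -> x = y.
Proof. unfold le; intros h1 h2. rewrite <- h1. rewrite meetC. exact h2. Qed.

Lemma le_tl (c d : A) : le c (tl d) <-> le (mul A d c) (zero A).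
Proof. unfold le, tl. split; apply (resid_l A). Qed.

Lemma le_ng (c d : A) : le c (ng d) <-> le (mul A c d) (zero A).
Proof. unfold le, ng. split; apply (resid_r A). Qed.

Lemma le_1 (c b : A) : le c b <-> le (mul A c (tl b)) (zero A).
Proof. rewrite <- le_ng. rewrite (proj2 (H b)). tauto. Qed.

Lemma le_2 (c b : A) : le c b <-> le (mul A (ng b) c) (zero A).
Proof. rewrite <- le_tl. rewrite (proj1 (H b)). tauto. Qed.

Lemma fplus_alt (a b : A) : fplus a b = ng (mul A (tl b) (tl a)).
Proof.
  assert (E : forall z, le z (fplus a b) <-> le z (ng (mul A (tl b) (tl a)))).
  { intro z. unfold fplus. rewrite le_tl, <- mulA, <- le_2, le_1, <- mulA.
    rewrite <- le_tl, (proj1 (H a)), le_1, <- mulA, <- le_ng. tauto. }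
  apply le_anti; [apply E; apply le_refl' | apply E; apply le_refl'].
Qed.
End S.

Section Q.
Variable A : qRA.

Lemma cmpl_ng (x : A) : cmpl A (ng x) = tl (cmpl A x).
Proof.
  pose proof (cmpl_tl A (ng x)) as E. rewrite (proj1 (qinv A x)) in E.
  rewrite E. symmetry. apply (proj1 (qinv A _)).
Qed.

Lemma gp_anti (x y : A) :
  mul A (tl (cmpl A x)) (tl (cmpl A y)) = tl (cmpl A (mul A y x)).
Proof.
  rewrite <- (cmpl_invol A (mul A (tl (cmpl A x)) _)).
  rewrite cmpl_mul, !cmpl_tl, !cmpl_invol, fplus_alt by apply qinv.
  rewrite (proj1 (qinv A x)), (proj1 (qinv A y)).
  rewrite <- cmpl_ng. reflexivity.
Qed.

Lemma g_anti (x y : A) :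
  mul A (ng (cmpl A x)) (ng (cmpl A y)) = ng (cmpl A (mul A y x)).
Proof.
  rewrite <- (cmpl_invol A (mul A (ng (cmpl A x)) _)).
  rewrite cmpl_mul, !cmpl_ng, !cmpl_invol.
  unfold fplus. rewrite (proj2 (qinv A x)), (proj2 (qinv A y)).
  rewrite cmpl_tl. reflexivity.
Qed.

Lemma tt_eq (z : A) : tl (tl z) = tl (cmpl A (ng (cmpl A z))).
Proof. rewrite cmpl_ng, cmpl_invol. reflexivity. Qed.

Lemma nn_eq (z : A) : ng (ng z) = ng (cmpl A (tl (cmpl A z))).
Proof. rewrite cmpl_tl, cmpl_invol. reflexivity. Qed.

Lemma tt_hom (a b : A) : tl (tl (mul A a b)) = mul A (tl (tl a)) (tl (tl b)).
Proof. rewrite !tt_eq, <- g_anti, <- gp_anti. reflexivity. Qed.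

Lemma nn_hom (a b : A) : ng (ng (mul A a b)) = mul A (ng (ng a)) (ng (ng b)).
Proof. rewrite !nn_eq, <- gp_anti, <- g_anti. reflexivity. Qed.
End Q.

Theorem lemma2p3 (A : qRA) (n : nat) (a b : A) :
  0 < n ->
  Nat.iter (2 * n) (@tl A) (mul A a b) =
    mul A (Nat.iter (2 * n) (@tl A) a) (Nat.iter (2 * n) (@tl A) b) /\
  Nat.iter (2 * n) (@ng A) (mul A a b) =
    mul A (Nat.iter (2 * n) (@ng A) a) (Nat.iter (2 * n) (@ng A) b).
Proof.
  intros _. induction n as [|m [IH1 IH2]].
  - split; reflexivity.
  - replace (2 * S m) with (S (S (2 * m))) by lia. rewrite !Nat.iter_succ.
    rewrite IH1, IH2, tt_hom, nn_hom. split; reflexivity.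
Qed.
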